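(* Let $n\ge 2$, let $A_1\ldots A_n$ be a regular $n$-gon in the coordinate plane whose center is the origin, and let $f(x)$ be the monic polynomial of degree $n$ whose roots, counted with multiplicity, are the abscissas of $A_1,\ldots,A_n$. Then the coefficients of $x^{n-1},x^{n-3},x^{n-5},\ldots$ in $f(x)$ are all zero, except the constant term when $n$ is odd. *)

(* Defs.v *)
From HB Require Import structures.
From mathcomp Require Import all_boot all_order all_algebra.
From mathcomp Require Import all_classical all_reals.
From mathcomp Require Import ereal topology normedtype sequences exp trigo.
Set Implicit Arguments. Unset Strict Implicit. Unset Printing Implicit Defensive.
Import Order.TTheory GRing.Theory Num.Theory.
Local Open Scope ring_scope.

Definition ngon_vertex (R : realType) (n : nat) (r theta : R) (k : nat) : R * R :=
  (r * cos (theta + 2 * pi * k%:R / n%:R),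
   r * sin (theta + 2 * pi * k%:R / n%:R)).

Definition regular_ngon_at_origin (R : realType) (n : nat) (A : 'I_n -> R * R) : Prop :=
  exists (r theta : R), 0 < r /\ forall k : 'I_n, A k = ngon_vertex n r theta k.

Definition abscissa_poly (R : realType) (n : nat) (A : 'I_n -> R * R) : {poly R} :=
  \prod_(k < n) ('X - ((A k).1)%:P).

(* Main.v *)
Require Import Defs.
From HB Require Import structures.
From mathcomp Require Import all_boot all_order all_algebra.
From mathcomp Require Import all_classical all_reals.
From mathcomp Require Import ereal topology normedtype sequences exp trigo.
From mathcomp Require Import ring zify.
Import Order.TTheory GRing.Theory Num.Theory.
Local Open Scope ring_scope.

Lemma deriv_prod_ord (R : realType) (F : nat -> {poly R}) n :
  (\prod_(i < n) F i)^`() = \sum_(i < n) (F i)^`() * \prod_(j < n | j != i) F j.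
Proof.
elim: n => [|n IH]; first by rewrite !big_ord0 derivC.
rewrite big_ord_recr derivM IH [RHS]big_ord_recr /=.
rewrite mulr_suml; congr (_ + _).
- apply: eq_bigr => i _; rewrite -mulrA; congr (_ * _).
  rewrite [RHS](big_mkcond (fun j : 'I_n.+1 => j != widen_ord (leqnSn n) i)).
  rewrite big_ord_recr /=.
  have -> : (ord_max != widen_ord (leqnSn n) i) by apply/eqP => /(congr1 val) /= h; move: (ltn_ord i); rewrite -h ltnn.
  by rewrite big_mkcond; congr (_ * _).
- rewrite mulrC; congr (_ * _).
  rewrite (big_mkcond (fun j : 'I_n.+1 => j != ord_max)) big_ord_recr /= eqxx mulr1.
  apply: eq_bigr => j _.
  by have -> : (widen_ord (leqnSn n) j != ord_max) by apply/eqP => /(congr1 val) /= h; move: (ltn_ord j); rewrite h ltnn.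
Qed.

Lemma newton (R : realType) (n : nat) (c : nat -> R) :
  (forall m, odd m -> (m < n)%N -> \sum_(k < n) c k ^+ m = 0) ->
  forall i, (0 < i)%N -> (i < n)%N -> odd (n - i) ->
  (\prod_(k < n) ('X - (c k)%:P))`_i = 0.
Proof.
move=> Hp.
set f := \prod_(k < n) _.
pose q (k : 'I_n) := \prod_(j < n | j != k) ('X - (c j)%:P).
have fq (k : 'I_n) : f = ('X - (c k)%:P) * q k by rewrite /f (bigD1 k).
have szf : size f = n.+1.
  by rewrite /f size_prod_XsubC [index_enum _]unlock -enumT size_enum_ord.
have szq (k : 'I_n) : size (q k) = n.
  have qn0 : q k != 0.
    apply/eqP => h; move: szf; rewrite (fq k) h mulr0 size_poly0 //.
  have := szf; rewrite (fq k) size_mul ?polyXsubC_eq0 // size_XsubC.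
  by move=> /eqP; rewrite add2n /= eqSS => /eqP.
have qhigh (k : 'I_n) j : (n <= j)%N -> (q k)`_j = 0.
  by move=> h; apply: nth_default; rewrite szq.
have rec (k : 'I_n) j : f`_j.+1 = (q k)`_j - c k * (q k)`_j.+1.
  by rewrite (fq k) mulrBl coefB coefXM coefCM.
have der j : f`_j.+1 *+ j.+1 = \sum_k (q k)`_j.
  rewrite -coef_deriv /f (deriv_prod_ord _ (fun k => 'X - (c k)%:P)) coef_sum; apply: eq_bigr => k _.
  by rewrite derivXsubC mul1r.
pose B j m := \sum_(k < n) c k ^+ m * (q k)`_j.
have Brec j m : B j m = (\sum_(k<n) c k ^+ m) * f`_j.+1 + B j.+1 m.+1.
  rewrite /B mulr_suml -big_split; apply: eq_bigr => k _ /=.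
  rewrite (rec k j) exprS; ring.
have Bhigh j m : (n <= j)%N -> B j m = 0.
  by move=> h; rewrite /B big1 // => k _; rewrite qhigh // mulr0.
have B0 j : B j 0 = f`_j.+1 *+ j.+1.
  by rewrite der /B; apply: eq_bigr => k _; rewrite expr0 mul1r.
suff H : forall d i, (n - i <= d)%N -> (0 < i)%N -> (i < n)%N -> odd (n - i) -> f`_i = 0.
  by move=> i; apply: (H (n - i)%N).
elim=> [|d IHd] i hd hi0 hin hodd; first by lia.
have inner : forall t j, (i <= j)%N -> (n <= j + t)%N -> B j (j.+1 - i)%N = 0.
  elim=> [|t IHt] j hij hjt; first by apply: Bhigh; lia.
  case: (leqP n j) => hnj; first exact: Bhigh.
  rewrite Brec.
  have -> : (j.+1 - i).+1 = (j.+1.+1 - i)%N by lia.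
  rewrite IHt; [|lia|lia]; rewrite addr0.
  case ho: (odd (j.+1 - i)).
    by rewrite Hp ?mul0r //; lia.
  have hsplit : (n - i = (n - j.+1) + (j.+1 - i))%N by lia.
  have ho2 : odd (n - j.+1) by move: hodd; rewrite hsplit oddD ho addbF.
  have hjn : (j.+1 < n)%N.
    by move: ho2; case E: (n - j.+1)%N => [|x] //= _; lia.
  by rewrite (IHd j.+1) ?mulr0 //; lia.
case: i hd hi0 hin hodd inner => [|i] //= hd _ hin hodd inner.
have := Brec i 0; rewrite B0.
have -> : (\sum_(k < n) c k ^+ 0) = n%:R.
  by rewrite (eq_bigr (fun _ => 1)) ?sumr_const ?card_ord // => k _; rewrite expr0.
have -> : B i.+1 1 = 0 by have := inner n i.+1; rewrite subSnn; apply; lia.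
rewrite addr0 => /eqP; rewrite -(mulr_natl (f`_i.+1)) -subr_eq0 -mulrBl mulf_eq0.
rewrite subr_eq0 eqr_nat; case/orP => [/eqP|/eqP->//]; lia.
Qed.
Lemma sin_per (R : realType) (x : R) (a : nat) : sin (x + pi *+ 2 * a%:R) = sin x.
Proof.
elim: a => [|a IH]; first by rewrite mulr0 addr0.
by rewrite -natr1 mulrDr mulr1 addrA sinD2pi.
Qed.

Lemma cos_sum0 (R : realType) (n a : nat) (th : R) : (0 < a)%N -> (a < n)%N ->
  \sum_(k < n) cos (a%:R * (th + 2 * pi * k%:R / n%:R)) = 0.
Proof.
move=> a0 an.
have n0 : n%:R != 0 :> R by rewrite pnatr_eq0; lia.
pose al : R := a%:R * pi / n%:R.
have sal : 0 < sin al.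
  apply: sin_gt0_pi; apply/andP; split.
    by rewrite /al divr_gt0 ?mulr_gt0 ?ltr0n ?pi_gt0 //; lia.
  rewrite /al ltr_pdivrMr ?ltr0n; last by lia.
  by rewrite mulrC ltr_pM2l ?pi_gt0 // ltr_nat.
pose g (k : nat) := sin (a%:R * th + (2 * k%:R - 1) * al).
have step k : (sin al * 2) * cos (a%:R * (th + 2 * pi * k%:R / n%:R)) = g k.+1 - g k.
  have -> : a%:R * (th + 2 * pi * k%:R / n%:R) = a%:R * th + 2 * k%:R * al.
    by rewrite /al; field.
  rewrite /g -(natr1 k).
  have -> : a%:R * th + (2 * (k%:R + 1) - 1) * al = (a%:R * th + 2 * k%:R * al) + al by ring.
  have -> : a%:R * th + (2 * k%:R - 1) * al = (a%:R * th + 2 * k%:R * al) - al by ring.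
  rewrite sinD sinB; ring.
have : (sin al * 2) * \sum_(k < n) cos (a%:R * (th + 2 * pi * k%:R / n%:R)) = 0.
  rewrite mulr_sumr; under eq_bigr => k _ do rewrite step.
  rewrite -(big_mkord xpredT (fun k => g k.+1 - g k)) telescope_sumr //.
  rewrite /g.
  have -> : a%:R * th + (2 * n%:R - 1) * al = (a%:R * th - al) + pi *+ 2 * a%:R.
    by rewrite /al mulr2n; field.
  by rewrite sin_per mulr0 sub0r mulN1r subrr.
move/eqP; rewrite mulf_eq0 mulf_eq0 => /orP [/orP [|]|/eqP //].
  by rewrite gt_eqF.
by rewrite pnatr_eq0.
Qed.

Lemma pow_cos_sum0 (R : realType) (n : nat) (th : R) : forall m a,
  odd (m + a) -> (m + a < n)%N ->
  \sum_(k < n) cos (th + 2 * pi * k%:R / n%:R) ^+ m *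
     cos (a%:R * (th + 2 * pi * k%:R / n%:R)) = 0.
Proof.
elim=> [|m IH] a ho hn.
  rewrite (eq_bigr (fun k : 'I_n => cos (a%:R * (th + 2 * pi * k%:R / n%:R)))); last first.
    by move=> k _; rewrite expr0 mul1r.
  apply: cos_sum0 => //; move: ho; case: a {hn} => //.
case: a ho hn => [|a] ho hn.
  rewrite -[RHS](IH 1%N); [|by move: ho; rewrite !addn0 addn1|lia].
  by apply: eq_bigr => k _; rewrite mul0r cos0 mulr1 mul1r exprSr.
have -> : \sum_(k < n) cos (th + 2 * pi * k%:R / n%:R) ^+ m.+1 *
     cos (a.+1%:R * (th + 2 * pi * k%:R / n%:R)) =
  (\sum_(k < n) cos (th + 2 * pi * k%:R / n%:R) ^+ m *
     cos (a.+2%:R * (th + 2 * pi * k%:R / n%:R)) +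
   \sum_(k < n) cos (th + 2 * pi * k%:R / n%:R) ^+ m *
     cos (a%:R * (th + 2 * pi * k%:R / n%:R))) / 2.
  rewrite -big_split mulr_suml; apply: eq_bigr => k _ /=.
  set ph := th + 2 * pi * k%:R / n%:R.
  have -> : a.+2%:R * ph = a.+1%:R * ph + ph by rewrite -(natr1 a.+1) mulrDl mul1r.
  have -> : a%:R * ph = a.+1%:R * ph - ph by rewrite -(natr1 a) mulrDl mul1r addrK.
  rewrite (cosD (a.+1%:R * ph) ph) (cosB (a.+1%:R * ph) ph) exprSr; by field.
rewrite (IH a.+2) ?(IH a) ?addr0 ?mul0r //.
- by move: ho; rewrite addnS /=; case: (odd (m + a)).
- lia.
- by move: ho; rewrite !addnS.
- lia.
Qed.

Theorem mainTheorem11 (R : realType) (n : nat) (A : 'I_n -> R * R) :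
  (2 <= n)%N -> regular_ngon_at_origin A ->
  forall i : nat, (0 < i)%N -> (i < n)%N -> odd (n - i) ->
    (abscissa_poly A)`_i = 0.
Proof.
move=> n2 [r [th [r0 HA]]].
pose c (k : nat) : R := r * cos (th + 2 * pi * k%:R / n%:R).
have -> : abscissa_poly A = \prod_(k < n) ('X - (c k)%:P).
  by apply: eq_bigr => k _; rewrite HA.
apply: newton => m hm hmn.
have H := @pow_cos_sum0 R n th m 0%N; rewrite addn0 in H; have {}H := H hm hmn.
transitivity (r ^+ m * 0); last by rewrite mulr0.
rewrite -[X in _ * X]H mulr_sumr; apply: eq_bigr => k _.
by rewrite /c exprMn mul0r cos0 mulr1.
Qed.
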